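(* Let $f:\mathbb{R}\to\mathbb{R}$ be a concave function such that $f(0)=0$, $f$ is differentiable at $0$, $f'(0)\neq 0$, $\sup_x f(x)=M>0$, and $\operatorname{argsup}_x f(x)>0$. Let $\mathbb{P}$ and $\mathbb{Q}$ be probability distributions with support $\mathcal{X}$, and let $\mathbb{M}=\frac12\mathbb{P}+\frac12\mathbb{Q}$. Define $$\mathrm{D}^{Rp}_f(\mathbb{P},\mathbb{Q})=\sup_{C:\mathcal{X}\to\mathbb{R}} 2\,\mathbb{E}_{x\sim\mathbb{P},\,y\sim\mathbb{Q}}\big[f(C(x)-C(y))\big],$$ $$\mathrm{D}^{Ra}_f(\mathbb{P},\mathbb{Q})=\sup_{C:\mathcal{X}\to\mathbb{R}} \mathbb{E}_{x\sim\mathbb{P}}\Big[f\big(C(x)-\mathbb{E}_{y\sim\mathbb{Q}}C(y)\big)\Big]+\mathbb{E}_{y\sim\mathbb{Q}}\Big[f\big(\mathbb{E}_{x\sim\mathbb{P}}C(x)-C(y)\big)\Big],$$ $$\mathrm{D}^{Ralf}_f(\mathbb{P},\mathbb{Q})=\sup_{C:\mathcal{X}\to\mathbb{R}} 2\,\mathbb{E}_{x\sim\mathbb{P}}\Big[f\big(C(x)-\mathbb{E}_{y\sim\mathbb{Q}}C(y)\big)\Big],$$ $$\mathrm{D}^{Rc}_f(\mathbb{P},\mathbb{Q})=\sup_{C:\mathcal{X}\to\mathbb{R}} \mathbb{E}_{x\sim\mathbb{P}}\Big[f\big(C(x)-\mathbb{E}_{m\sim\mathbb{M}}C(m)\big)\Big]+\mathbb{E}_{y\sim\mathbb{Q}}\Big[f\big(\mathbb{E}_{m\sim\mathbb{M}}C(m)-C(y)\big)\Big].$$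 Then $\mathrm{D}^{Rp}_f$, $\mathrm{D}^{Ra}_f$, $\mathrm{D}^{Ralf}_f$ and $\mathrm{D}^{Rc}_f$ are divergences.
   Context: The suprema range over (measurable) critic functions $C:\mathcal{X}\to\mathbb{R}$ for which the expectations are defined. A function $D$ assigning a real number to each pair of probability distributions on a common support is a divergence if for all $\mathbb{P},\mathbb{Q}$: $D(\mathbb{P},\mathbb{Q})\ge 0$, and $D(\mathbb{P},\mathbb{Q})=0$ if and only if $\mathbb{P}=\mathbb{Q}$. The condition $\operatorname{argsup}_x f(x)>0$ means the supremum of $f$ is reached at some positive $x$ (or approached as $x\to+\infty$). *)

(* Defs.v *)
From HB Require Import structures.
From mathcomp Require Import all_boot all_order all_algebra.
From mathcomp Require Import all_classical all_reals all_analysis.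
Set Implicit Arguments. Unset Strict Implicit. Unset Printing Implicit Defensive.
Import Order.TTheory GRing.Theory Num.Theory.
Import numFieldNormedType.Exports.
Local Open Scope classical_set_scope.
Local Open Scope ring_scope.

Definition concave (R : realType) (f : R -> R) : Prop :=
  forall (x y t : R), 0 <= t <= 1 ->
    t * f x + (1 - t) * f y <= f (t * x + (1 - t) * y).

Definition mixture d (T : measurableType d) (R : realType)
  (P Q : probability T R) :=
  mscale ((2:R)^-1)%:nng (measure_add P Q).

Definition critic d (T : measurableType d) (R : realType) (C : T -> R) :=
  measurable_fun setT C.

Local Open Scope ereal_scope.

(* Mean of C under a measure, as a real number (C is assumed integrable). *)
Definition mean d (T : measurableType d) (R : realType)
  (mu : {measure set T -> \bar R}) (C : T -> R) : R :=
  fine (\int[mu]_x (C x)%:E).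

Definition DRp d (T : measurableType d) (R : realType) (f : R -> R)
  (P Q : probability T R) : \bar R :=
  ereal_sup [set v | exists C : T -> R, critic C /\
     v = 2%:E * \int[(P \x Q)%E]_z (f (C z.1 - C z.2))%:E].

Definition icritic d (T : measurableType d) (R : realType)
  (P Q : probability T R) (C : T -> R) :=
  critic C /\ P.-integrable setT (EFin \o C) /\ Q.-integrable setT (EFin \o C).

Definition DRa d (T : measurableType d) (R : realType) (f : R -> R)
  (P Q : probability T R) : \bar R :=
  ereal_sup [set v | exists C : T -> R, icritic P Q C /\
     v = \int[P]_x (f (C x - mean Q C))%:E
         + \int[Q]_y (f (mean P C - C y))%:E].

Definition DRalf d (T : measurableType d) (R : realType) (f : R -> R)
  (P Q : probability T R) : \bar R :=
  ereal_sup [set v | exists C : T -> R, icritic P Q C /\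
     v = 2%:E * \int[P]_x (f (C x - mean Q C))%:E].

Definition DRc d (T : measurableType d) (R : realType) (f : R -> R)
  (P Q : probability T R) : \bar R :=
  ereal_sup [set v | exists C : T -> R, icritic P Q C /\
     v = \int[P]_x (f (C x - mean (mixture P Q) C))%:E
         + \int[Q]_y (f (mean (mixture P Q) C - C y))%:E].

Definition is_divergence d (T : measurableType d) (R : realType)
  (D : probability T R -> probability T R -> \bar R) : Prop :=
  forall P Q : probability T R,
    0 <= D P Q /\
    (D P Q = 0 <-> (forall A, measurable A -> P A = Q A)).

(* Main.v *)
Require Import Defs.
From HB Require Import structures.
From mathcomp Require Import all_boot all_order all_algebra.
From mathcomp Require Import all_classical all_reals all_analysis.
From mathcomp Require Import measurable_realfun.
From mathcomp Require Import ring lra.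
Import Order.TTheory GRing.Theory Num.Theory.
Import numFieldNormedType.Exports.
Local Open Scope classical_set_scope.
Local Open Scope ring_scope.

Section A.
Variables (R : realType) (f : R -> R).
Hypothesis fc : concave f.

Lemma conc_interval c : is_interval [set x | c < f x].
Proof.
move=> x y /= cx cy z /andP[xz zy].
have [xy|xy] := eqVneq x y.
  by move: xz zy cx; rewrite xy => xz zy _; have -> : z = y by apply/eqP; rewrite eq_le zy xz.
have xy' : x < y by rewrite lt_neqAle xy (le_trans xz zy).
pose t := (y - z) / (y - x).
have yx0 : 0 < y - x by rewrite subr_gt0.
have t0 : 0 <= t by apply: divr_ge0; lra.
have t1 : t <= 1 by rewrite /t ler_pdivrMr // mul1r; lra.
have hz : t * x + (1 - t) * y = z.
  rewrite /t; field; by rewrite subr_eq0 eq_sym.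
have := fc x y t (introT andP (conj t0 t1)); rewrite hz.
apply: lt_le_trans.
have [fxy|fxy] := leP (f x) (f y).
  have : 0 <= (1 - t) * (f y - f x) by apply: mulr_ge0; lra.
  lra.
have : 0 <= t * (f x - f y) by apply: mulr_ge0; lra.
lra.
Qed.

Lemma conc_meas : measurable_fun setT f.
Proof.
apply: (measurability _ (RGenOInfty.measurableE R)).
move=> /= _ [_ [a ->]] <-; apply: measurableI => //.
apply: is_interval_measurable.
have -> : f @^-1` `]a, +oo[%classic = [set x | a < f x].
  by apply/seteqP; split => x /=; rewrite in_itv /= andbT.
exact: conc_interval.
Qed.
End A.
Section I.
Context d (T : measurableType d) (R : realType).
Local Open Scope ereal_scope.

Lemma le_int_meas (mu : {measure set T -> \bar R}) (g h : T -> R) :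
  measurable_fun setT g -> measurable_fun setT h -> (forall x, (g x <= h x)%R) ->
  \int[mu]_x (g x)%:E <= \int[mu]_x (h x)%:E.
Proof.
move=> mg mh gh; rewrite integralE [leRHS]integralE leeB//.
- apply: ge0_le_integral => //.
  + by apply: measurable_funepos; exact/measurable_EFinP.
  + by apply: measurable_funepos; exact/measurable_EFinP.
  + by move=> x _; rewrite !funeposE /= -!EFin_max lee_fin ge_max !le_max gh lexx !orbT.
- apply: ge0_le_integral => //.
  + by apply: measurable_funeneg; exact/measurable_EFinP.
  + by apply: measurable_funeneg; exact/measurable_EFinP.
  + by move=> x _; rewrite !funenegE /= -!EFin_max lee_fin ge_max !le_max lerN2 gh lexx !orbT.
Qed.

Lemma int_indic (mu : {measure set T -> \bar R}) (A : set T) (phi : R -> R) :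
  measurable A ->
  \int[mu]_x (phi (\1_A x))%:E = (phi 1%R)%:E * mu A + (phi 0%R)%:E * mu (~` A).
Proof.
move=> mA.
have E : forall x, phi (\1_A x) = (phi 0%R + (phi 1%R - phi 0%R) * \1_A x)%R.
  move=> x; rewrite indicE; case: (x \in A) => /=; rewrite ?mulr1 ?mulr0 ?addr0 //.
  by rewrite addrC subrK.
have mAC : measurable (~` A) by exact: measurableC.
have dj : [disjoint A & ~` A] by rewrite /disj_set setICr.
have mf : measurable_fun (A `|` ~` A) (fun x => (phi (\1_A x))%:E).
  apply/measurable_EFinP; rewrite setUv.
  apply: (eq_measurable_fun (fun x => (phi 0%R + (phi 1%R - phi 0%R) * \1_A x)%R)).
    by move=> x _; rewrite E.
  apply: measurable_funD => //; apply: measurable_funM => //.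
rewrite -(setUv A) integral_setU //.
rewrite (eq_integral (fun _ => (phi 1%R)%:E)); last first.
  by move=> x /set_mem Ax; rewrite indicE mem_set.
rewrite [X in _ + X](eq_integral (fun _ => (phi 0%R)%:E)); last first.
  by move=> x /set_mem Ax; rewrite indicE memNset.
by rewrite !integral_cst //; exact: measurableC.
Qed.

Lemma bdd_int (mu : probability T R) (h : T -> R) (K : R) :
  measurable_fun setT h -> (forall x, `|h x| <= K)%R ->
  mu.-integrable setT (EFin \o h).
Proof.
move=> mh hK.
apply: (@le_integrable _ _ _ mu setT measurableT _ (EFin \o cst K)).
- exact/measurable_EFinP.
- move=> x _ /=; rewrite !lee_fin.
  by apply: (le_trans (hK x)); rewrite ler_norm.
- exact: finite_measure_integrable_cst.
Qed.

End I.
Section J.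
Context d (T : measurableType d) (R : realType).
Local Open Scope ereal_scope.

Lemma swap_int (P Q : probability T R) (h : T * T -> \bar R) :
  measurable_fun setT h -> (forall z, 0 <= h z) ->
  (forall A, measurable A -> P A = Q A) ->
  \int[P \x Q]_z h (z.2, z.1) = \int[P \x Q]_z h z.
Proof.
move=> mh h0 PQ.
rewrite (fubini_tonelli1 (fun z => h (z.2, z.1))); last 2 first.
- exact: (measurableT_comp mh (measurable_fun_pair measurable_snd measurable_fst)).
- by move=> z; exact: h0.
rewrite [RHS]fubini_tonelli2 //.
rewrite /fubini_F /fubini_G /=.
rewrite (eq_measure_integral Q); last by move=> A mA _; exact: PQ.
apply: eq_integral => y _.
by apply: (eq_measure_integral P) => A mA _; apply/esym; exact: PQ.
Qed.

Lemma maxineq (u v : R) : (u + v <= 0)%R ->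
  (Num.max u 0 + Num.max v 0 <= Num.max (- u) 0 + Num.max (- v) 0)%R.
Proof.
move=> h; rewrite /Num.max /Order.max.
by do 4 case: ltP => ?; lra.
Qed.

Lemma sym_le0 (P Q : probability T R) (g : T * T -> R) :
  measurable_fun setT g ->
  (forall z, g z + g (z.2, z.1) <= 0)%R ->
  (forall A, measurable A -> P A = Q A) ->
  \int[P \x Q]_z (g z)%:E <= 0.
Proof.
move=> mg gs PQ.
have mG : measurable_fun setT (EFin \o g) by exact/measurable_EFinP.
rewrite integralE.
set gp := (EFin \o g)^\+; set gn := (EFin \o g)^\-.
have mgp : measurable_fun setT gp by exact: measurable_funepos.
have mgn : measurable_fun setT gn by exact: measurable_funeneg.
have gp0 : forall z, 0 <= gp z by move=> z; exact: funepos_ge0.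
have gn0 : forall z, 0 <= gn z by move=> z; exact: funeneg_ge0.
have mgps : measurable_fun setT (fun z : T * T => gp (z.2, z.1)).
  exact: (measurableT_comp mgp (measurable_fun_pair measurable_snd measurable_fst)).
have mgns : measurable_fun setT (fun z : T * T => gn (z.2, z.1)).
  exact: (measurableT_comp mgn (measurable_fun_pair measurable_snd measurable_fst)).
have key : \int[P \x Q]_z (gp z + gp (z.2, z.1)) <=
           \int[P \x Q]_z (gn z + gn (z.2, z.1)).
  apply: ge0_le_integral => //.
  - by move=> z _; exact: adde_ge0.
  - exact: emeasurable_funD.
  - exact: emeasurable_funD.
  - move=> z _; rewrite /gp /gn !funeposE !funenegE /= -!EFin_max.
    rewrite -!EFinD lee_fin.
    have := gs z; case: z => x y /=.
    exact: maxineq.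
have e1 := @swap_int _ _ _ mgp gp0 PQ.
have e2 := @swap_int _ _ _ mgn gn0 PQ.
rewrite ge0_integralD // in key; try by move=> *; exact: gp0.
rewrite ge0_integralD // in key; try by move=> *; exact: gn0.
rewrite e1 e2 in key.
move: key.
have ip0 : 0 <= \int[P \x Q]_z gp z by apply: integral_ge0.
have in0 : 0 <= \int[P \x Q]_z gn z by apply: integral_ge0.
move: ip0 in0.
case: (\int[P \x Q]_z gp z) => [a| |]; case: (\int[P \x Q]_z gn z) => [b| |] //=.
- move=> _ _; rewrite -!EFinD lee_fin => h; rewrite -[X in _ <= X]/(0%R%:E) lee_fin; lra.
Qed.

End J.
Section X.
Variables (R : realType) (f : R -> R).
Hypothesis fd : derivable f 0 1.
Lemma near_lin e : 0 < e -> exists2 del : R, 0 < del &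
  forall h, `|h| < del -> `|f h - f 0 - derive1 f 0 * h| <= e * `|h|.
Proof.
move=> e0.
have cv := fd; unfold derivable in cv.
move/cvg_ex: cv => [l hl].
have lE : derive1 f 0 = l by rewrite derive1E /derive; apply: cvg_lim.
have := @cvgr_dist_le _ _ _ _ (@dnbhs_filter R 0) _ _ hl _ e0.
rewrite near_withinE => Hn; have [/= del del0 Hd] := nbhs_norm0P.1 Hn.
exists del => // h hd.
have [->|h0] := eqVneq h 0.
  by rewrite normr0 !mulr0 subrr subr0 normr0.
have := Hd h hd h0; rewrite /= lE addr0.
have -> : l - h^-1 *: (f h%:A - f 0) = - h^-1 * (f h - f 0 - l * h).
  rewrite /GRing.scale /= mulr1; field; exact: h0.
rewrite normrM normrN normrV ?unitfE // ler_pdivrMl ?normr_gt0 //.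
by rewrite [e * _]mulrC.
Qed.
End X.


Section K.
Context d (T : measurableType d) (R : realType) (f : R -> R).
Hypothesis fc : concave f.
Hypothesis f0 : f 0 = 0.
Hypothesis fd : derivable f 0 1.
Let a := derive1 f 0.

Lemma lower e : 0 < e -> exists2 del : R, 0 < del &
  forall h, `|h| < del -> a * h - e * `|h| <= f h.
Proof.
move=> e0; have [del d0 H] := (@near_lin _ _ fd _ e0).
exists del => // h hd; have := H h hd; rewrite f0 subr0 ler_norml => /andP[h1 _].
rewrite /a; lra.
Qed.

Lemma tangent u : f u <= a * u.
Proof.
have [->|u0] := eqVneq u 0; first by rewrite f0 mulr0.
rewrite leNgt; apply/negP => H.
have nu : 0 < `|u| by rewrite normr_gt0.
pose e := (f u - a * u) / (2 * `|u|).
have e0 : 0 < e by rewrite /e divr_gt0 ?subr_gt0 // mulr_gt0.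
have [del d0 Hd] := (@near_lin _ _ fd _ e0).
pose t := del / (2 * `|u| + del).
have t0 : 0 < t by rewrite /t divr_gt0 // addr_gt0 // mulr_gt0.
have t1 : t <= 1.
  by rewrite /t ler_pdivrMr ?addr_gt0 ?mulr_gt0 // mul1r lerDr mulr_ge0.
have tud : `|t * u| < del.
  rewrite normrM (gtr0_norm t0) /t mulrAC ltr_pdivrMr ?addr_gt0 ?mulr_gt0 //.
  have : 0 < del * `|u| by rewrite mulr_gt0.
  nra.
have := Hd _ tud; rewrite f0 subr0 ler_norml => /andP[_ h2].
have := fc u 0 t (introT andP (conj (ltW t0) t1)).
rewrite f0 mulr0 !addr0 => h3.
have h4 : t * f u <= t * (a * u + e * `|u|).
  rewrite normrM (gtr0_norm t0) in h2.
  have -> : t * (a * u + e * `|u|) = a * (t * u) + e * (t * `|u|) by ring.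
  rewrite -/a in h2; lra.
rewrite ler_pM2l // in h4.
have : e * `|u| = (f u - a * u) / 2.
  rewrite /e; field; by rewrite normr_eq0.
lra.
Qed.

Local Open Scope ereal_scope.

Lemma int_lin (mu : probability T R) (C : T -> R) (al be : R) :
  mu.-integrable setT (EFin \o C) ->
  \int[mu]_x (al * C x + be)%:E = (al * fine (\int[mu]_x (C x)%:E) + be)%:E.
Proof.
move=> iC.
have i1 : mu.-integrable setT (EFin \o (fun x => (al * C x)%R)).
  have -> : EFin \o (fun x => (al * C x)%R) = (fun x => al%:E * (EFin \o C) x).
    by apply/funext => x /=; rewrite EFinM.
  exact: integrableZl.
have i2 : mu.-integrable setT (EFin \o (fun=> be)).
  exact: finite_measure_integrable_cst.
transitivity (\int[mu]_x ((EFin \o (fun x => (al * C x)%R)) \+ (EFin \o fun=> be)) x).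
  by apply: eq_integral => x _; rewrite /= EFinD.
rewrite integralD_EFin //.
rewrite (eq_integral (fun x => al%:E * (EFin \o C) x)); last first.
  by move=> x _; rewrite /= EFinM.
rewrite integralZl //.
rewrite [X in _ + X](eq_integral (cst be%:E)) // integral_cst //.
rewrite [X in be%:E * X](_ : _ = 1); last exact: probability_setT.
rewrite mule1.
have hf : \int[mu]_x (C x)%:E \is a fin_num by exact: integrable_fin_num.
by rewrite -[\int[mu]_x (EFin \o C) x](fineK hf) -EFinM -EFinD.
Qed.

Lemma int_tan (mu : probability T R) (C : T -> R) (c : R) :
  mu.-integrable setT (EFin \o C) ->
  \int[mu]_x (f (C x - c))%:E <= (a * (fine (\int[mu]_x (C x)%:E) - c))%:E.
Proof.
move=> iC; have mC : measurable_fun setT C.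
  by apply/measurable_EFinP; exact: (measurable_int _ iC).
apply: (le_trans (le_int_meas _ _ _ mu _ (fun x => (a * C x + (- a * c))%R) _ _ _)).
- apply: measurableT_comp; first exact: conc_meas.
  exact: measurable_funB.
- by apply: measurable_funD => //; apply: measurable_funM.
- by move=> x; rewrite mulNr; have := tangent (C x - c); rewrite mulrBr.
by rewrite int_lin // lee_fin mulrBr mulNr.
Qed.

Lemma int_tan' (mu : probability T R) (C : T -> R) (c : R) :
  mu.-integrable setT (EFin \o C) ->
  \int[mu]_x (f (c - C x))%:E <= (a * (c - fine (\int[mu]_x (C x)%:E)))%:E.
Proof.
move=> iC; have mC : measurable_fun setT C.
  by apply/measurable_EFinP; exact: (measurable_int _ iC).
apply: (le_trans (le_int_meas _ _ _ mu _ (fun x => (- a * C x + a * c)%R) _ _ _)).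
- apply: measurableT_comp; first exact: conc_meas.
  exact: measurable_funB.
- by apply: measurable_funD => //; apply: measurable_funM.
- by move=> x; rewrite mulNr [X in (_ <= X)%R]addrC; have := tangent (c - C x); rewrite mulrBr.
by rewrite int_lin // lee_fin mulrBr mulNr addrC.
Qed.

End K.
Section L.
Context d (T : measurableType d) (R : realType) (f : R -> R).
Hypothesis fc : concave f.
Hypothesis f0 : f 0 = 0.
Hypothesis fd : derivable f 0 1.
Hypothesis fa : derive1 f 0 != 0.
Let a := derive1 f 0.

Lemma absle (t x y : R) : 0 <= x <= 1 -> 0 <= y <= 1 -> `|t * x - t * y| <= `|t|.
Proof.
move=> /andP[x0 x1] /andP[y0 y1].
rewrite -mulrBr normrM ler_piMr //.
rewrite ler_norml; apply/andP; split; lra.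
Qed.

Lemma choose_t (p q : R) : p != q -> exists t e : R,
  [/\ 0 < e, 0 < `|t|, a * t * (p - q) = 4 * e * `|t| &
    forall h, `|h| <= `|t| -> a * h - e * `|t| <= f h].
Proof.
move=> pq.
pose L := a * (p - q).
have L0 : L != 0 by rewrite /L mulf_neq0 // subr_eq0.
pose e := `|L| / 4.
have e0 : 0 < e by rewrite /e divr_gt0 // normr_gt0.
have [del d0 Hd] := lower _ _ f0 fd _ e0.
pose tau := del / 2.
have tau0 : 0 < tau by rewrite /tau divr_gt0.
pose t := if 0 < L then tau else - tau.
have nt : `|t| = tau by rewrite /t; case: ifP => _; rewrite ?normrN gtr0_norm.
exists t, e; split => //.
- by rewrite nt.
- have -> : a * t * (p - q) = t * L by rewrite /L; ring.
  rewrite nt /e /t; case: ifPn => HL.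
    by rewrite gtr0_norm //; field.
  have HL' : L < 0 by rewrite lt_neqAle L0 /= leNgt.
  by rewrite ltr0_norm //; field.
- move=> h hh.
  have hd : `|h| < del by rewrite (le_lt_trans hh) // nt /tau ltr_pdivrMr // ltr_pMr // ltr1n.
  have := Hd h hd.
  have : e * `|h| <= e * `|t| by rewrite ler_pM2l.
  rewrite /a; lra.
Qed.

Local Open Scope ereal_scope.

Lemma int_indicP (mu : probability T R) (A : set T) (phi : R -> R) :
  measurable A ->
  \int[mu]_x (phi (\1_A x))%:E =
  (phi 1%R * fine (mu A) + phi 0%R * (1 - fine (mu A)))%:E.
Proof.
move=> mA; rewrite int_indic //.
rewrite [X in _ + _ * X](_ : _ = 1 - mu A); last exact: probability_setC.
have hf : mu A \is a fin_num by exact: fin_num_measure.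
by rewrite EFinD !EFinM EFinB fineK.
Qed.

Lemma meanE (mu : probability T R) (A : set T) (t : R) :
  measurable A -> mean mu (fun x => t * \1_A x)%R = (t * fine (mu A))%R.
Proof.
move=> mA; rewrite /mean (int_indicP mu A (fun s : R => (t * s)%R) mA) /=.
by rewrite mulr1 mulr0 mul0r addr0.
Qed.

Lemma mixA (P Q : probability T R) (A : set T) : measurable A ->
  mixture P Q A = ((fine (P A) + fine (Q A)) / 2)%:E.
Proof.
move=> mA; rewrite /mixture /mscale /= /msum !big_ord_recr big_ord0 /= add0e.
have hP : P A \is a fin_num by exact: fin_num_measure.
have hQ : Q A \is a fin_num by exact: fin_num_measure.
rewrite mulrC EFinM EFinD fineK // fineK //.
Qed.

Lemma meanM (P Q : probability T R) (A : set T) (t : R) :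
  measurable A -> mean (mixture P Q) (fun x => t * \1_A x)%R =
  (t * ((fine (P A) + fine (Q A)) / 2))%R.
Proof.
move=> mA; rewrite /mean (int_indic _ _ _ (mixture P Q) A (fun s : R => (t * s)%R) mA).
rewrite [X in _ * X + _](_ : _ = ((fine (P A) + fine (Q A)) / 2)%:E); last exact: mixA.
by rewrite mulr0 mul0e adde0 mulr1 /=.
Qed.

End L.
Section M.
Context d (T : measurableType d) (R : realType) (f : R -> R).
Hypothesis fc : concave f.
Hypothesis f0 : f 0 = 0.
Hypothesis fd : derivable f 0 1.
Hypothesis fa : derive1 f 0 != 0.
Local Notation a := (derive1 f 0).

Local Open Scope ereal_scope.

Lemma int0f (mu : {measure set T -> \bar R}) (g : T -> R) :
  (forall x, g x = 0%R) -> \int[mu]_x (g x)%:E = 0.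
Proof.
by move=> h; rewrite (eq_integral (fun=> 0)) ?integral0 // => x _; rewrite h.
Qed.

Lemma int0f2 (mu : {measure set (T * T) -> \bar R}) (g : T * T -> R) :
  (forall x, g x = 0%R) -> \int[mu]_x (g x)%:E = 0.
Proof.
by move=> h; rewrite (eq_integral (fun=> 0)) ?integral0 // => x _; rewrite h.
Qed.

Lemma icritic0 (P Q : probability T R) : icritic P Q (fun=> 0%R).
Proof.
split; first exact: measurable_cst.
by split; exact: finite_measure_integrable_cst.
Qed.

Lemma mean0 (mu : {measure set T -> \bar R}) : mean mu (fun=> 0%R) = 0%R.
Proof. by rewrite /mean int0f. Qed.

Lemma DRp_ge0 (P Q : probability T R) : 0 <= DRp f P Q.
Proof.
apply: ereal_sup_ubound; exists (fun=> 0%R); split; first exact: measurable_cst.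
by rewrite int0f2 ?mule0 // => z /=; rewrite subrr f0.
Qed.

Lemma DRa_ge0 (P Q : probability T R) : 0 <= DRa f P Q.
Proof.
apply: ereal_sup_ubound; exists (fun=> 0%R); split; first exact: icritic0.
by rewrite !mean0 !int0f ?adde0 // => x /=; rewrite subrr f0.
Qed.

Lemma DRalf_ge0 (P Q : probability T R) : 0 <= DRalf f P Q.
Proof.
apply: ereal_sup_ubound; exists (fun=> 0%R); split; first exact: icritic0.
by rewrite !mean0 !int0f ?mule0 // => x /=; rewrite subrr f0.
Qed.

Lemma DRc_ge0 (P Q : probability T R) : 0 <= DRc f P Q.
Proof.
apply: ereal_sup_ubound; exists (fun=> 0%R); split; first exact: icritic0.
by rewrite !mean0 !int0f ?adde0 // => x /=; rewrite subrr f0.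
Qed.

Lemma DRp_le0 (P Q : probability T R) :
  (forall A, measurable A -> P A = Q A) -> DRp f P Q <= 0.
Proof.
move=> PQ; apply: ub_ereal_sup => _ [C [mC ->]].
apply: mule_ge0_le0 => //.
apply: (sym_le0 _ _ _ _ _ (fun z => f (C z.1 - C z.2))) => //.
- apply: measurableT_comp; first exact: conc_meas.
  apply: measurable_funB.
    exact: (measurableT_comp mC measurable_fst).
  exact: (measurableT_comp mC measurable_snd).
- move=> z /=.
  have h1 := tangent _ _ fc f0 fd (C z.1 - C z.2).
  have h2 := tangent _ _ fc f0 fd (C z.2 - C z.1).
  lra.
Qed.

Lemma meanPQ (P Q : {measure set T -> \bar R}) (C : T -> R) :
  (forall A, measurable A -> P A = Q A) -> mean Q C = mean P C.
Proof.
move=> PQ; rewrite /mean (eq_measure_integral P) // => A mA _.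
by apply/esym; exact: PQ.
Qed.

Lemma DRa_le0 (P Q : probability T R) :
  (forall A, measurable A -> P A = Q A) -> DRa f P Q <= 0.
Proof.
move=> PQ; apply: ub_ereal_sup => _ [C [[mC [iP iQ]] ->]].
have h1 := int_tan _ _ _ _ fc f0 fd P C (mean Q C) iP.
have h2 := int_tan' _ _ _ _ fc f0 fd Q C (mean P C) iQ.
rewrite -/(mean P C) -/(mean Q C) (meanPQ _ _ C PQ) subrr mulr0 in h1 h2.
rewrite (meanPQ _ _ C PQ); have := leeD h1 h2; by rewrite -EFinD addr0.
Qed.

Lemma DRalf_le0 (P Q : probability T R) :
  (forall A, measurable A -> P A = Q A) -> DRalf f P Q <= 0.
Proof.
move=> PQ; apply: ub_ereal_sup => _ [C [[mC [iP iQ]] ->]].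
have h1 := int_tan _ _ _ _ fc f0 fd P C (mean Q C) iP.
rewrite -/(mean P C) (meanPQ _ _ C PQ) subrr mulr0 in h1.
by rewrite (meanPQ _ _ C PQ); apply: mule_ge0_le0.
Qed.

Lemma DRc_le0 (P Q : probability T R) :
  (forall A, measurable A -> P A = Q A) -> DRc f P Q <= 0.
Proof.
move=> PQ; apply: ub_ereal_sup => _ [C [[mC [iP iQ]] ->]].
have PM : forall A, measurable A -> P A = mixture P Q A.
  move=> A mA; rewrite mixA // -(PQ A mA).
  have hP : P A \is a fin_num by exact: fin_num_measure.
  by rewrite -[in LHS](fineK hP); congr (_%:E); field.
have mM : mean (mixture P Q) C = mean P C.
  by apply: meanPQ => A mA; exact: PM.
have mQ : mean Q C = mean P C by apply: meanPQ => A mA; exact: PQ.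
rewrite mM.
have h1 := int_tan _ _ _ _ fc f0 fd P C (mean P C) iP.
have h2 := int_tan' _ _ _ _ fc f0 fd Q C (mean P C) iQ.
rewrite -/(mean P C) -/(mean Q C) mQ subrr mulr0 in h1 h2.
have := leeD h1 h2; by rewrite -EFinD addr0.
Qed.

End M.
Section N.
Context d (T : measurableType d) (R : realType) (f : R -> R).
Hypothesis fc : concave f.
Hypothesis f0 : f 0 = 0.
Hypothesis fd : derivable f 0 1.
Hypothesis fa : derive1 f 0 != 0.
Local Notation a := (derive1 f 0).

Lemma fin_DRa (p q t e a F1 F2 F3 F4 : R) :
  0 <= p <= 1 -> 0 <= q <= 1 -> 0 < e -> 0 < `|t| ->
  a * t * (p - q) = 4 * e * `|t| ->
  a * (t * 1 - t * q) - e * `|t| <= F1 ->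
  a * (t * 0 - t * q) - e * `|t| <= F2 ->
  a * (t * p - t * 1) - e * `|t| <= F3 ->
  a * (t * p - t * 0) - e * `|t| <= F4 ->
  0 < F1 * p + F2 * (1 - p) + (F3 * q + F4 * (1 - q)).
Proof.
move=> /andP[p0 p1] /andP[q0 q1] e0 t0 lin h1 h2 h3 h4.
have k1 : 0 <= (F1 - (a * (t * 1 - t * q) - e * `|t|)) * p by apply: mulr_ge0; lra.
have k2 : 0 <= (F2 - (a * (t * 0 - t * q) - e * `|t|)) * (1 - p) by apply: mulr_ge0; lra.
have k3 : 0 <= (F3 - (a * (t * p - t * 1) - e * `|t|)) * q by apply: mulr_ge0; lra.
have k4 : 0 <= (F4 - (a * (t * p - t * 0) - e * `|t|)) * (1 - q) by apply: mulr_ge0; lra.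
have k5 : 0 < e * `|t| by apply: mulr_gt0.
lra.
Qed.

Lemma fin_DRalf (p q t e a F1 F2 : R) :
  0 <= p <= 1 -> 0 <= q <= 1 -> 0 < e -> 0 < `|t| ->
  a * t * (p - q) = 4 * e * `|t| ->
  a * (t * 1 - t * q) - e * `|t| <= F1 ->
  a * (t * 0 - t * q) - e * `|t| <= F2 ->
  0 < 2 * (F1 * p + F2 * (1 - p)).
Proof.
move=> /andP[p0 p1] /andP[q0 q1] e0 t0 lin h1 h2.
have k1 : 0 <= (F1 - (a * (t * 1 - t * q) - e * `|t|)) * p by apply: mulr_ge0; lra.
have k2 : 0 <= (F2 - (a * (t * 0 - t * q) - e * `|t|)) * (1 - p) by apply: mulr_ge0; lra.
have k5 : 0 < e * `|t| by apply: mulr_gt0.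
lra.
Qed.

Lemma fin_DRc (p q t e a F1 F2 F3 F4 : R) :
  0 <= p <= 1 -> 0 <= q <= 1 -> 0 < e -> 0 < `|t| ->
  a * t * (p - q) = 4 * e * `|t| ->
  a * (t * 1 - t * ((p + q) / 2)) - e * `|t| <= F1 ->
  a * (t * 0 - t * ((p + q) / 2)) - e * `|t| <= F2 ->
  a * (t * ((p + q) / 2) - t * 1) - e * `|t| <= F3 ->
  a * (t * ((p + q) / 2) - t * 0) - e * `|t| <= F4 ->
  0 < F1 * p + F2 * (1 - p) + (F3 * q + F4 * (1 - q)).
Proof.
move=> /andP[p0 p1] /andP[q0 q1] e0 t0 lin h1 h2 h3 h4.
set m := (p + q) / 2 in h1 h2 h3 h4.
have mE : m * 2 = p + q by rewrite /m; field.
have k1 : 0 <= (F1 - (a * (t * 1 - t * m) - e * `|t|)) * p by apply: mulr_ge0; lra.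
have k2 : 0 <= (F2 - (a * (t * 0 - t * m) - e * `|t|)) * (1 - p) by apply: mulr_ge0; lra.
have k3 : 0 <= (F3 - (a * (t * m - t * 1) - e * `|t|)) * q by apply: mulr_ge0; lra.
have k4 : 0 <= (F4 - (a * (t * m - t * 0) - e * `|t|)) * (1 - q) by apply: mulr_ge0; lra.
have k5 : 0 < e * `|t| by apply: mulr_gt0.
have k6 : a * t * m * 2 = a * t * (p + q) by rewrite -mE; ring.
lra.
Qed.

Lemma fin_DRp (p q t e a F1 F2 F3 F4 : R) :
  0 <= p <= 1 -> 0 <= q <= 1 -> 0 < e -> 0 < `|t| ->
  a * t * (p - q) = 4 * e * `|t| ->
  a * (t * 1 - t * 1) - e * `|t| <= F1 ->
  a * (t * 1 - t * 0) - e * `|t| <= F2 ->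
  a * (t * 0 - t * 1) - e * `|t| <= F3 ->
  a * (t * 0 - t * 0) - e * `|t| <= F4 ->
  0 < 2 * ((F1 * q + F2 * (1 - q)) * p + (F3 * q + F4 * (1 - q)) * (1 - p)).
Proof.
move=> /andP[p0 p1] /andP[q0 q1] e0 t0 lin h1 h2 h3 h4.
have k1 : 0 <= (F1 - (a * (t * 1 - t * 1) - e * `|t|)) * (q * p).
  by apply: mulr_ge0; [lra|apply: mulr_ge0; lra].
have k2 : 0 <= (F2 - (a * (t * 1 - t * 0) - e * `|t|)) * ((1 - q) * p).
  by apply: mulr_ge0; [lra|apply: mulr_ge0; lra].
have k3 : 0 <= (F3 - (a * (t * 0 - t * 1) - e * `|t|)) * (q * (1 - p)).
  by apply: mulr_ge0; [lra|apply: mulr_ge0; lra].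
have k4 : 0 <= (F4 - (a * (t * 0 - t * 0) - e * `|t|)) * ((1 - q) * (1 - p)).
  by apply: mulr_ge0; [lra|apply: mulr_ge0; lra].
have k5 : 0 < e * `|t| by apply: mulr_gt0.
lra.
Qed.

Lemma p01 (mu : probability T R) (A : set T) : measurable A ->
  0 <= fine (mu A) <= 1.
Proof.
move=> mA; have hf : mu A \is a fin_num by exact: fin_num_measure.
have h0 : (0 <= mu A)%E by exact: measure_ge0.
have h1 : (mu A <= 1)%E by exact: probability_le1.
rewrite -(fineK hf) !lee_fin in h0 h1.
by rewrite h0 h1.
Qed.

Lemma pqneq (P Q : probability T R) (A : set T) : measurable A ->
  P A != Q A -> fine (P A) != fine (Q A).
Proof.
move=> mA; apply: contra => /eqP h.
have hP : P A \is a fin_num by exact: fin_num_measure.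
have hQ : Q A \is a fin_num by exact: fin_num_measure.
by rewrite -(fineK hP) -(fineK hQ) h.
Qed.

Lemma mCt (A : set T) (t : R) : measurable A ->
  measurable_fun setT (fun x => t * \1_A x).
Proof.
by move=> mA; apply: measurable_funM => //; exact: measurable_indic.
Qed.

Lemma icriticC (P Q : probability T R) (A : set T) (t : R) : measurable A ->
  icritic P Q (fun x => t * \1_A x).
Proof.
move=> mA; split; first exact: mCt.
have hb : forall x, `|t * \1_A x| <= `|t|.
  by move=> x; rewrite indicE; case: (x \in A); rewrite /= ?mulr1 ?mulr0 ?normr0.
split; apply: (bdd_int _ _ _ _ _ `|t|) => //; exact: mCt.
Qed.

Local Open Scope ereal_scope.

Lemma DRa_pos (P Q : probability T R) (A : set T) : measurable A ->
  P A != Q A -> 0 < DRa f P Q.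
Proof.
move=> mA PQ.
set p := fine (P A); set q := fine (Q A).
have pq : p != q by exact: pqneq.
have [t [e [e0 t0 lin lb]]] := choose_t _ _ f0 fd fa p q pq.
apply: (lt_le_trans _ (ereal_sup_ubound _)); last first.
  by exists (fun x => t * \1_A x)%R; split; [exact: icriticC|reflexivity].
rewrite /= !meanE // -/p -/q.
rewrite (int_indicP _ _ _ _ _ (fun s => f (t * s - t * q))%R mA).
rewrite (int_indicP _ _ _ _ _ (fun s => f (t * p - t * s))%R mA) -/p -/q.
rewrite -EFinD lte_fin.
have [p0 p1] : (0 <= p)%R /\ (p <= 1)%R by apply/andP; exact: p01.
have [q0 q1] : (0 <= q)%R /\ (q <= 1)%R by apply/andP; exact: p01.
have i1 : (0 <= (1:R) <= 1)%R by apply/andP; split; lra.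
have i0 : (0 <= (0:R) <= 1)%R by apply/andP; split; lra.
have ip : (0 <= p <= 1)%R by rewrite p0 p1.
have iq : (0 <= q <= 1)%R by rewrite q0 q1.
apply: (fin_DRa _ _ _ _ _ _ _ _ _ ip iq e0 t0 lin); apply: lb; exact: absle.
Qed.

Lemma DRalf_pos (P Q : probability T R) (A : set T) : measurable A ->
  P A != Q A -> 0 < DRalf f P Q.
Proof.
move=> mA PQ.
set p := fine (P A); set q := fine (Q A).
have pq : p != q by exact: pqneq.
have [t [e [e0 t0 lin lb]]] := choose_t _ _ f0 fd fa p q pq.
apply: (lt_le_trans _ (ereal_sup_ubound _)); last first.
  by exists (fun x => t * \1_A x)%R; split; [exact: icriticC|reflexivity].
rewrite /= !meanE // -/p -/q.
rewrite (int_indicP _ _ _ _ _ (fun s => f (t * s - t * q))%R mA) -/p.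
rewrite -EFinM lte_fin.
have [p0 p1] : (0 <= p)%R /\ (p <= 1)%R by apply/andP; exact: p01.
have [q0 q1] : (0 <= q)%R /\ (q <= 1)%R by apply/andP; exact: p01.
have i1 : (0 <= (1:R) <= 1)%R by apply/andP; split; lra.
have i0 : (0 <= (0:R) <= 1)%R by apply/andP; split; lra.
have ip : (0 <= p <= 1)%R by rewrite p0 p1.
have iq : (0 <= q <= 1)%R by rewrite q0 q1.
apply: (fin_DRalf _ _ _ _ _ _ _ ip iq e0 t0 lin); apply: lb; exact: absle.
Qed.

Lemma DRc_pos (P Q : probability T R) (A : set T) : measurable A ->
  P A != Q A -> 0 < DRc f P Q.
Proof.
move=> mA PQ.
set p := fine (P A); set q := fine (Q A).
have pq : p != q by exact: pqneq.
have [t [e [e0 t0 lin lb]]] := choose_t _ _ f0 fd fa p q pq.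
apply: (lt_le_trans _ (ereal_sup_ubound _)); last first.
  by exists (fun x => t * \1_A x)%R; split; [exact: icriticC|reflexivity].
rewrite /= meanM // -/p -/q.
rewrite (int_indicP _ _ _ _ _ (fun s => f (t * s - t * ((p + q) / 2)))%R mA).
rewrite (int_indicP _ _ _ _ _ (fun s => f (t * ((p + q) / 2) - t * s))%R mA) -/p -/q.
rewrite -EFinD lte_fin.
have [p0 p1] : (0 <= p)%R /\ (p <= 1)%R by apply/andP; exact: p01.
have [q0 q1] : (0 <= q)%R /\ (q <= 1)%R by apply/andP; exact: p01.
have i1 : (0 <= (1:R) <= 1)%R by apply/andP; split; lra.
have i0 : (0 <= (0:R) <= 1)%R by apply/andP; split; lra.
have ip : (0 <= p <= 1)%R by rewrite p0 p1.
have iq : (0 <= q <= 1)%R by rewrite q0 q1.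
have im : (0 <= (p + q) / 2 <= 1)%R by apply/andP; split; lra.
apply: (fin_DRc _ _ _ _ _ _ _ _ _ ip iq e0 t0 lin); apply: lb; exact: absle.
Qed.

Lemma DRp_pos (P Q : probability T R) (A : set T) : measurable A ->
  P A != Q A -> 0 < DRp f P Q.
Proof.
move=> mA PQ.
set p := fine (P A); set q := fine (Q A).
have pq : p != q by exact: pqneq.
have [t [e [e0 t0 lin lb]]] := choose_t _ _ f0 fd fa p q pq.
apply: (lt_le_trans _ (ereal_sup_ubound _)); last first.
  by exists (fun x => t * \1_A x)%R; split; [exact: mCt|reflexivity].
rewrite /=.
have mF : measurable_fun setT (fun z : T * T => f (t * \1_A z.1 - t * \1_A z.2))%R.
  apply: measurableT_comp; first exact: conc_meas.
  apply: measurable_funB.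
    exact: (measurableT_comp (mCt _ _ mA) measurable_fst).
  exact: (measurableT_comp (mCt _ _ mA) measurable_snd).
pose K := (`|f (t * 1 - t * 1)| + `|f (t * 1 - t * 0)| + `|f (t * 0 - t * 1)|
  + `|f (t * 0 - t * 0)|)%R.
have iF := bdd_int _ _ _ (P \x Q) _ K mF.
rewrite -(integral12_prod_meas1 (iF _)); last first.
  move=> z; rewrite /K !indicE.
  have := normr_ge0 (f (t * 1 - t * 1)); have := normr_ge0 (f (t * 1 - t * 0)).
  have := normr_ge0 (f (t * 0 - t * 1)); have := normr_ge0 (f (t * 0 - t * 0)).
  by case: (z.1 \in A); case: (z.2 \in A) => /=; lra.
rewrite (eq_integral (fun x => ((fun s => f (t * s - t * 1) * q
    + f (t * s - t * 0) * (1 - q))%R (\1_A x))%:E)); last first.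
  move=> x _; rewrite /fubini_F /=.
  by rewrite (int_indicP _ _ _ Q A (fun s => f (t * \1_A x - t * s))%R mA).
rewrite (int_indicP _ _ _ P A (fun s => f (t * s - t * 1) * q + f (t * s - t * 0) * (1 - q))%R mA) -/p.
rewrite -EFinM lte_fin.
have [p0 p1] : (0 <= p)%R /\ (p <= 1)%R by apply/andP; exact: p01.
have [q0 q1] : (0 <= q)%R /\ (q <= 1)%R by apply/andP; exact: p01.
have i1 : (0 <= (1:R) <= 1)%R by apply/andP; split; lra.
have i0 : (0 <= (0:R) <= 1)%R by apply/andP; split; lra.
have ip : (0 <= p <= 1)%R by rewrite p0 p1.
have iq : (0 <= q <= 1)%R by rewrite q0 q1.
apply: (fin_DRp _ _ _ _ _ _ _ _ _ ip iq e0 t0 lin); apply: lb; exact: absle.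
Qed.

End N.

Theorem theorem3p1 (R : realType) (f : R -> R) (M : R)
  (d : measure_display) (T : measurableType d) :
  concave f ->
  f 0 = 0 ->
  derivable f 0 1 ->
  derive1 f 0 != 0 ->
  ereal_sup (range (fun x => (f x)%:E)) = M%:E ->
  0 < M ->
  ((exists x, 0 < x /\ f x = M) \/ (f x @[x --> +oo] --> M)) ->
  is_divergence (@DRp d T R f) /\ is_divergence (@DRa d T R f) /\
  is_divergence (@DRalf d T R f) /\ is_divergence (@DRc d T R f).
Proof.
move=> fc f0 fd fa _ _ _.
split; [|split; [|split]] => P Q; (split; [|split]).
- exact: DRp_ge0.
- move=> D0 A mA; apply/eqP/negPn/negP => nA.
  by have := DRp_pos _ _ _ _ fc f0 fd fa P Q A mA nA; rewrite D0 ltxx.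
- by move=> PQ; apply/le_anti; rewrite DRp_le0 // DRp_ge0.
- exact: DRa_ge0.
- move=> D0 A mA; apply/eqP/negPn/negP => nA.
  by have := DRa_pos _ _ _ _ f0 fd fa P Q A mA nA; rewrite D0 ltxx.
- by move=> PQ; apply/le_anti; rewrite DRa_le0 // DRa_ge0.
- exact: DRalf_ge0.
- move=> D0 A mA; apply/eqP/negPn/negP => nA.
  by have := DRalf_pos _ _ _ _ f0 fd fa P Q A mA nA; rewrite D0 ltxx.
- by move=> PQ; apply/le_anti; rewrite DRalf_le0 // DRalf_ge0.
- exact: DRc_ge0.
- move=> D0 A mA; apply/eqP/negPn/negP => nA.
  by have := DRc_pos _ _ _ _ f0 fd fa P Q A mA nA; rewrite D0 ltxx.
- by move=> PQ; apply/le_anti; rewrite DRc_le0 // DRc_ge0.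
Qed.
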